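(* Let $B>0$ and let $\mu$ be a finite Borel measure on $[-B,B]^d$ with uncountable support $\operatorname{supp}\mu$. For $x^*,v\in\mathbb{R}^d$ with $v\ne0$ define $H_\pm(x^*,v)=x^*+H_\pm(v)$, where $H_+(v)=\{x\in\mathbb{R}^d:\langle x,v\rangle>0\}$ and $H_-(v)=\{x\in\mathbb{R}^d:\langle x,v\rangle<0\}$. Then there exist $x^*\in[-B,B]^d$ and $v\in S^{d-1}$ such that the following holds: if $f:[-B,B]^d\to\mathbb{R}$ satisfies $f(x)=c$ for $x\in H_+(x^*,v)$ and $f(x)=c'$ for $x\in H_-(x^*,v)$ (restricted to $[-B,B]^d$) with constants $c\ne c'$, then there is no continuous $g:[-B,B]^d\to\mathbb{R}$ with $f=g$ $\mu$-almost everywhere.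
   Context: $S^{d-1}$ denotes the Euclidean unit sphere in $\mathbb{R}^d$ and $\langle\cdot,\cdot\rangle$ the Euclidean inner product. *)

(* Defs.v *)
From HB Require Import structures.
From mathcomp Require Import all_boot all_order all_algebra.
From mathcomp Require Import all_classical all_reals all_analysis.
Set Implicit Arguments. Unset Strict Implicit. Unset Printing Implicit Defensive.
Import Order.TTheory GRing.Theory Num.Theory.
Import numFieldTopology.Exports numFieldNormedType.Exports.
Local Open Scope classical_set_scope.
Local Open Scope ring_scope.

Definition borelRd (R : realType) (d : nat) : measurableType _ :=
  g_sigma_algebraType (@open ('rV[R]_d)).

Definition dotv (R : realType) (d : nat) (x y : 'rV[R]_d) : R :=
  \sum_(i < d) x 0 i * y 0 i.

Definition cube (R : realType) (d : nat) (B : R) : set 'rV[R]_d :=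
  [set x | forall i : 'I_d, - B <= x 0 i <= B].

Definition sphere (R : realType) (d : nat) : set 'rV[R]_d :=
  [set v | dotv v v = 1].

Definition Hplus (R : realType) (d : nat) (xs v : 'rV[R]_d) : set 'rV[R]_d :=
  [set x | 0 < dotv (x - xs) v].
Definition Hminus (R : realType) (d : nat) (xs v : 'rV[R]_d) : set 'rV[R]_d :=
  [set x | dotv (x - xs) v < 0].

Definition msupp (R : realType) (d : nat)
  (mu : {measure set (borelRd R d) -> \bar R}) : set 'rV[R]_d :=
  [set x | forall U : set 'rV[R]_d, open U -> U x -> (0 < mu U)%E].

(* Main.v *)
Require Import Defs.
From HB Require Import structures.
From mathcomp Require Import all_boot all_order all_algebra.
From mathcomp Require Import all_classical all_reals all_analysis.
From mathcomp Require Import lra.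
Import Order.TTheory GRing.Theory Num.Theory.
Import numFieldTopology.Exports numFieldNormedType.Exports.
Local Open Scope classical_set_scope.
Local Open Scope ring_scope.

Section Helpers.
Variables (R : realType) (d : nat).

Lemma ballrV (x y : 'rV[R]_d) e :
  ball x e y <-> 0 < e /\ forall j, `|x 0 j - y 0 j| < e.
Proof.
rewrite /ball /= /mx_ball; split => [[e0 H]|[e0 H]]; split => //.
  move=> j; exact: H.
move=> a b; rewrite (ord1 a); exact: H.
Qed.

Lemma coord_open_gt (a : R) i : open [set z : 'rV[R]_d | a < z 0 i].
Proof.
have -> : [set z : 'rV[R]_d | a < z 0 i] = (fun z : 'rV[R]_d => z 0 i) @^-1` [set x | a < x] by [].
apply: open_comp; last exact: open_gt.
move=> z _; exact: coord_continuous.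
Qed.

Lemma coord_open_lt (a : R) i : open [set z : 'rV[R]_d | z 0 i < a].
Proof.
have -> : [set z : 'rV[R]_d | z 0 i < a] = (fun z : 'rV[R]_d => z 0 i) @^-1` [set x | x < a] by [].
apply: open_comp; last exact: open_lt.
move=> z _; exact: coord_continuous.
Qed.

Lemma cubeC_open (B : R) : open (~` cube B : set 'rV[R]_d).
Proof.
rewrite openE => x /= nx.
have [i ni] : exists i, ~ (- B <= x 0 i <= B).
  by apply: contrapT => H; apply: nx => i; apply: contrapT => Hi; apply: H; exists i.
have : (x 0 i < - B) \/ (B < x 0 i).
  case: (ltP (x 0 i) (- B)) => h1; first by left.
  case: (ltP B (x 0 i)) => h2; first by right.
  by exfalso; apply: ni; rewrite h1 h2.
case=> h.
- have : nbhs x [set z : 'rV[R]_d | z 0 i < - B].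
    by apply: open_nbhs_nbhs; split => //; exact: coord_open_lt.
  apply: filterS => z zi cz; have /andP[+ _] := cz i.
  by rewrite leNgt zi.
- have : nbhs x [set z : 'rV[R]_d | B < z 0 i].
    by apply: open_nbhs_nbhs; split => //; exact: coord_open_gt.
  apply: filterS => z zi cz; have /andP[_ +] := cz i.
  by rewrite leNgt zi.
Qed.

Lemma meas_open (U : set 'rV[R]_d) : open U -> measurable (U : set (borelRd R d)).
Proof. move=> oU; exact: sub_sigma_algebra. Qed.

Definition Good (S : set 'rV[R]_d) (i : 'I_d) (xs : 'rV[R]_d) :=
  forall e, 0 < e ->
    (exists y, S y /\ ball xs e y /\ xs 0 i < y 0 i) /\
    (exists y, S y /\ ball xs e y /\ y 0 i < xs 0 i).

Definition inbox (q : {ffun 'I_d -> rat * rat}) (y : 'rV[R]_d) :=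
  forall j, ratr (q j).1 < y 0 j < ratr (q j).2.

Definition Pd (S : set 'rV[R]_d) (x : 'rV[R]_d) (i : 'I_d)
  (t : {ffun 'I_d -> rat * rat} * bool) :=
  inbox t.1 x /\
  (if t.2 then forall y, S y -> inbox t.1 y -> y 0 i <= x 0 i
   else forall y, S y -> inbox t.1 y -> x 0 i <= y 0 i).

Lemma key (S : set 'rV[R]_d) : ~ countable S -> exists i xs, S xs /\ Good S i xs.
Proof.
move=> Sunc; apply: contrapT => Hn; apply: Sunc.
have Hbad : forall x, S x -> forall i, exists e, 0 < e /\
   ((forall y, S y -> ball x e y -> y 0 i <= x 0 i) \/
    (forall y, S y -> ball x e y -> x 0 i <= y 0 i)).
  move=> x Sx i; apply: contrapT => H2; apply: Hn; exists i, x; split => // e e0.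
  split; apply: contrapT => H3; apply: H2; exists e; split => //.
  - left => y Sy bxy; rewrite leNgt; apply/negP => lt; apply: H3; by exists y.
  - right => y Sy bxy; rewrite leNgt; apply/negP => lt; apply: H3; by exists y.
have Hdat : forall x, S x -> forall i, exists t, Pd S x i t.
  move=> x Sx i; have [e [e0 H]] := Hbad x Sx i.
  have hq : forall j, exists qr : rat * rat,
      (x 0 j - e < ratr qr.1 < x 0 j) /\ (x 0 j < ratr qr.2 < x 0 j + e).
    move=> j.
    have [q1] := @rat_in_itvoo R (x 0 j - e) (x 0 j) ltac:(lra).
    have [q2] := @rat_in_itvoo R (x 0 j) (x 0 j + e) ltac:(lra).
    rewrite !in_itv /= => h2 h1; by exists (q1, q2).
  have [qf hqf] := choice hq.
  have inb : inbox [ffun j => qf j] x.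
    move=> j; rewrite ffunE; have [/andP[_ a] /andP[b _]] := hqf j.
    by rewrite a b.
  have sub : forall y, inbox [ffun j => qf j] y -> ball x e y.
    move=> y hy; apply/ballrV; split => // j; have := hy j; rewrite ffunE.
    have [/andP[a b] /andP[c dd]] := hqf j; move=> /andP[u w].
    rewrite ltr_norml; apply/andP; split; lra.
  case: H => H; [exists ([ffun j => qf j], true) | exists ([ffun j => qf j], false)];
    split => //= y Sy /sub; exact: H.
have [Phi hPhi] : exists Phi : 'rV[R]_d -> 'I_d -> {ffun 'I_d -> rat * rat} * bool,
    forall x, S x -> forall i, Pd S x i (Phi x i).
  have : forall x, exists F : 'I_d -> {ffun 'I_d -> rat * rat} * bool,
      S x -> forall i, Pd S x i (F i).
    move=> x; case: (pselect (S x)) => Sx; last first.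
      by exists (fun=> ([ffun=> (0%R, 0%R)], true)).
    have [F hF] := choice (Hdat x Sx); by exists F.
  by move=> /choice [F hF]; exists F.
apply/countable_injP; exists (fun x => pickle [ffun i => Phi x i]).
move=> x y; rewrite !inE => Sx Sy /(pcan_inj pickleK) /ffunP eq.
apply/rowP => j; have := eq j; rewrite !ffunE => e.
have [bx hx] := hPhi x Sx j; have [b_y hy] := hPhi y Sy j.
rewrite e in bx hx.
move: bx hx b_y hy; case: (Phi y j) => q b /=; case: b => bx hx b_y hy.
- by apply/le_anti; rewrite (hx y Sy b_y) (hy x Sx bx).
- by apply/le_anti; rewrite (hx y Sy b_y) (hy x Sx bx).
Qed.

End Helpers.

Theorem lemmaD1 (R : realType) (d : nat) (B : R) (hB : 0 < B)
  (mu : {measure set (borelRd R d) -> \bar R})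
  (mu_fin : (mu setT < +oo)%E)
  (mu_cube : mu (~` cube B) = 0%E)
  (mu_unc : ~ countable (msupp mu)) :
  exists xs : 'rV[R]_d, exists v : 'rV[R]_d,
    cube B xs /\ sphere v /\
    forall (f : 'rV[R]_d -> R) (c c' : R), c != c' ->
      (forall x, cube B x -> Hplus xs v x -> f x = c) ->
      (forall x, cube B x -> Hminus xs v x -> f x = c') ->
      ~ exists g : 'rV[R]_d -> R,
          {within cube B, continuous g} /\
          {ae mu, forall x : borelRd R d, cube B x -> f x = g x}.
Proof.
set S := msupp mu.
have Scube : forall x, S x -> cube B x.
  move=> x Sx; apply: contrapT => nx.
  by have := Sx _ (@cubeC_open R d B) nx; rewrite mu_cube ltxx.
have [i [xs [Sxs Gxs]]] := @key R d _ mu_unc.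
pose v : 'rV[R]_d := delta_mx 0 i.
have dotvE : forall x, dotv x v = x 0 i.
  move=> x; rewrite /dotv (bigD1 i) //= big1 => [|j ji].
    by rewrite !mxE !eqxx /= mulr1 addr0.
  by rewrite !mxE (negbTE ji) andbF mulr0.
exists xs, v; split; first exact: Scube.
split; first by rewrite /sphere /= dotvE /v mxE !eqxx.
move=> f c c' cc' hp hm [g [gc gae]].
case: gae => N [mN muN sN].
have gcx := (proj1 (subspace_continuousP _ _) gc) xs (Scube _ Sxs).
pose eps := `|c - c'| / 2.
have eps0 : 0 < eps by rewrite divr_gt0 // normr_gt0 subr_eq0.
have := cvgr_dist_lt _ _ gcx _ eps0.
move=> /(_ (within_filter _ _)).
rewrite /within /= => /nbhs_ballP [e /= e0 He].
have side : forall H : set 'rV[R]_d, open H ->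
    (exists y, S y /\ ball xs e y /\ H y) ->
    exists z, H z /\ `|g xs - g z| < eps /\ cube B z /\ f z = g z.
  move=> H oH [y [Sy [bxy Hy]]].
  have oU : open (ball xs e `&` H) by apply: openI => //; exact: ball_open.
  have U0 : (0 < mu (ball xs e `&` H))%E := Sy _ oU (conj bxy Hy).
  apply: contrapT => nz.
  have sub : ball xs e `&` H `<=` N `|` ~` cube B.
    move=> z [bz Hz]; case: (pselect (cube B z)) => cz; last by right.
    left; apply: sN => /= Pz; apply: nz; exists z; split => //.
    by split; [exact: He | split => //; exact: Pz].
  have : (mu (ball xs e `&` H) <= 0)%E.
    have L := le_measure mu _ _ sub.
    apply: le_trans (L _ _) _.
    - by rewrite inE; exact: meas_open.
    - by rewrite inE; apply: measurableU => //; exact: meas_open (@cubeC_open R d B).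
    apply: le_trans (measureU2 _ _ _) _ => //; first exact: meas_open (@cubeC_open R d B).
    have E1 : (mu N + mu (~` cube B) = 0)%E by rewrite muN mu_cube adde0.
    have := lexx (0%E : \bar R); rewrite -{1}E1; exact.
  by rewrite leNgt U0.
have [y1 hy1] := (Gxs e e0).1.
have [y2 hy2] := (Gxs e e0).2.
have [z1 [H1 [n1 [cz1 fz1]]]] := side _ (@coord_open_gt R d (xs 0 i) i) ltac:(by exists y1).
have [z2 [H2 [n2 [cz2 fz2]]]] := side _ (@coord_open_lt R d (xs 0 i) i) ltac:(by exists y2).
have e1 : f z1 = c.
  by apply: hp => //; rewrite /Hplus /= dotvE !mxE subr_gt0.
have e2 : f z2 = c'.
  by apply: hm => //; rewrite /Hminus /= dotvE !mxE subr_lt0.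
move: n1 n2; rewrite -fz1 -fz2 e1 e2 => n1 n2.
have := ler_distD (g xs) c c'.
rewrite [`|c - g xs|]distrC.
have : `|c - c'| = eps + eps by rewrite /eps; lra.

lra.
Qed.
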